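(* For every $k\ge1$ (with no restriction $k\le n$), in $\mathbb{Q}[S_n]$, \[B_1^k=\sum_{j=1}^{\min(k,n)} S_{k,j}\,B_j,\] where $S_{k,j}$ is the Stirling number of the second kind.
   Context: Elements of $S_n$ are written in deck notation: a word $c_1\cdots c_n$ (a rearrangement of $1,\ldots,n$) is the deck with card $c_i$ in position $i$. Multiplication in $\mathbb{Q}[S_n]$: for $\sigma=c_1\cdots c_n$, $\tau=d_1\cdots d_n$, $\sigma\tau=c_{d_1}\cdots c_{d_n}$, extended bilinearly. For $a\in[n]$, $B_a$ is the sum of all words $c_1\cdots c_n\in S_n$ in which the letters $a+1,\ldots,n$ appear in increasing order from left to right. *)

(* Defs.v *)
From HB Require Import structures.
From mathcomp Require Import all_boot all_order all_algebra all_fingroup.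
Set Implicit Arguments. Unset Strict Implicit. Unset Printing Implicit Defensive.
Import GRing.Theory.
Local Open Scope ring_scope.

(* A deck c_1...c_n is encoded as s : 'S_n with s i = card at position i
   (0-indexed: position i+1 holds card (s i)+1). *)

Notation QSn n := {ffun 'S_n -> rat}.

(* Deck product: (sigma tau) has card c_{d_i} at position i, i.e. the
   function i |-> sigma (tau i); in mathcomp's left-to-right convention
   this is (tau * sigma)%g. *)
Definition deck_mul n (sigma tau : 'S_n) : 'S_n := (tau * sigma)%g.

Definition qmul n (f g : QSn n) : QSn n :=
  [ffun w => \sum_(s : 'S_n) \sum_(t : 'S_n)
                (f s * g t) *+ (deck_mul s t == w)].

Definition qone n : QSn n := [ffun w => (w == 1%g)%:R].

Definition qpow n (f : QSn n) (k : nat) : QSn n := iter k (qmul f) (qone n).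

(* B_a : sum of all decks in which the letters a+1,...,n appear in increasing
   order from left to right.  Letter c (1-indexed) is x : 'I_n with x = c-1,
   and its position is s^-1 x. *)
Definition inc_above n (a : nat) (s : 'S_n) : bool :=
  [forall x : 'I_n, forall y : 'I_n,
     ((a <= x)%N && (x < y)%N) ==> ((s^-1)%g x < (s^-1)%g y)%N].

Definition B n (a : nat) : QSn n := [ffun s => (inc_above a s)%:R].

Fixpoint stirling2 (k j : nat) : nat :=
  match k, j with
  | 0, 0 => 1
  | 0, _.+1 => 0
  | _.+1, 0 => 0
  | k'.+1, j'.+1 => (j'.+1 * stirling2 k' j'.+1 + stirling2 k' j')%N
  end.

(* Main.v *)
Require Import Defs.
From HB Require Import structures.
From mathcomp Require Import all_boot all_order all_algebra all_fingroup.
From mathcomp Require Import zify.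
Set Implicit Arguments. Unset Strict Implicit. Unset Printing Implicit Defensive.
Import GRing.Theory.

Lemma incP m (a : nat) (s : 'S_m.+1) :
  reflect (forall x y : nat, a <= x -> x < y -> y < m.+1 ->
     (s^-1)%g (inord x) < (s^-1)%g (inord y)) (inc_above a s).
Proof.
apply: (iffP forallP) => H.
- move=> x y ax xy ym.
  have := forallP (H (inord x)) (inord y).
  rewrite !inordK ?ax ?xy //=; lia.
- move=> x; apply/forallP => y; apply/implyP => /andP[ax xy].
  by have := H x y ax xy (ltn_ord y); rewrite !inord_val.
Qed.

Ltac ifs := repeat (case: ifP => ?).

Definition cycf (p x : nat) : nat := if x < p then x.+1 else if x == p then 0 else x.
Definition cinvf (p x : nat) : nat := if x == 0 then p else if x <= p then x.-1 else x.

Lemma cycf_lt p x : x < p -> cycf p x = x.+1.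
Proof. by rewrite /cycf => ->. Qed.
Lemma cycf_eq p : cycf p p = 0.
Proof. by rewrite /cycf ltnn eqxx. Qed.
Lemma cycf_gt p x : p < x -> cycf p x = x.
Proof. rewrite /cycf => h; rewrite ltnNge ltnW //=; case: eqP => //; lia. Qed.

Lemma cycf_bd m p x : p < m -> x < m -> cycf p x < m.
Proof. rewrite /cycf; ifs; lia. Qed.
Lemma cinvf_bd m p x : p < m -> x < m -> cinvf p x < m.
Proof. rewrite /cinvf; ifs; lia. Qed.

Section Cyc.
Variable m : nat.
Variable p : 'I_m.+1.
Definition cycfun (x : 'I_m.+1) : 'I_m.+1 := inord (cycf p x).
Lemma cycfun_inj : injective cycfun.
Proof.
move=> x y /(congr1 (@nat_of_ord _)); rewrite /cycfun !inordK ?cycf_bd //.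
move=> h; apply/val_inj => /=. move: h; rewrite /cycf.
have := ltn_ord x; have := ltn_ord y; have := ltn_ord p.
ifs; lia.
Qed.
Definition cyc : 'S_m.+1 := perm cycfun_inj.
Lemma cycE x : cyc x = inord (cycf p x). Proof. by rewrite permE. Qed.

Lemma cyc_inv x : x < m.+1 -> (cyc^-1)%g (inord x) = inord (cinvf p x).
Proof.
move=> xm; apply: (@perm_inj _ cyc); rewrite permKV cycE inordK ?cinvf_bd //.
congr inord; have := ltn_ord p; rewrite /cinvf; ifs; rewrite /cycf; ifs; lia.
Qed.

Lemma cyc_inc : inc_above 1 cyc.
Proof.
apply/incP => x y hx xy ym.
have hp := ltn_ord p.
rewrite !cyc_inv; [|lia|lia].
rewrite !inordK; [| apply: cinvf_bd; lia | apply: cinvf_bd; lia].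
rewrite /cinvf; ifs; lia.
Qed.

Lemma cyc_inv0 : (cyc^-1)%g ord0 = p.
Proof.
have -> : (ord0 : 'I_m.+1) = inord 0 by apply/val_inj; rewrite /= inordK.
by rewrite cyc_inv //; apply/val_inj; rewrite /= inordK ?cinvf_bd.
Qed.
End Cyc.

Lemma mono_nat_lemma n (g : nat -> nat) (p : nat) :
  (forall x, x < n -> g x < n) ->
  (forall x y, x < n -> y < n -> g x = g y -> x = y) ->
  (forall x y, 1 <= x -> x < y -> y < n -> g x < g y) ->
  g 0 = p -> forall x, x < n -> g x = cinvf p x.
Proof.
move=> gb ginj mono g0 x xn.
have grow : forall d x, 1 <= x -> x + d < n -> g x + d <= g (x + d).
  elim=> [|d IH] z hz hzd; first by rewrite !addn0.
  have := IH z hz ltac:(lia); have := mono (z + d) (z + d.+1) ltac:(lia) ltac:(lia) hzd; lia.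
have low : forall x, 1 <= x -> x < n -> x.-1 <= g x.
  move=> z hz zn; have := grow (z - 1) 1 (leqnn _).
  rewrite (_ : 1 + (z - 1) = z); lia.
have up : forall x, 1 <= x -> x < n -> g x <= x.
  move=> z hz zn; have := grow (n.-1 - z) z hz.
  rewrite (_ : z + (n.-1 - z) = n.-1); try lia.
  have := gb n.-1; lia.
have pn : p < n by rewrite -g0; apply: gb; lia.
rewrite /cinvf; case: ifP => [/eqP -> //|x0].
case: ifP => xp.
- have := low x ltac:(lia) xn; have := up x ltac:(lia) xn.
  case: (ltngtP (g x) x) => E; try lia.
  have := grow (p - x) x ltac:(lia) ltac:(lia).
  rewrite (_ : x + (p - x) = p); try lia.
  have := up p ltac:(lia) pn.
  have := ginj p 0 pn ltac:(lia). lia.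
- have := low x ltac:(lia) xn; have := up x ltac:(lia) xn.
  case: (ltngtP (g x) x) => E; try lia.
  have := grow (x - p.+1) p.+1 ltac:(lia) ltac:(lia).
  rewrite (_ : p.+1 + (x - p.+1) = x); try lia.
  have := low p.+1 ltac:(lia) ltac:(lia).
  have := ginj p.+1 0 ltac:(lia) ltac:(lia). lia.
Qed.

Lemma inc1_cyc m (s : 'S_m.+1) : inc_above 1 s -> s = cyc ((s^-1)%g ord0).
Proof.
move=> /incP hs.
set p := (s^-1)%g ord0.
apply: invg_inj; apply/permP => x; apply/val_inj => /=.
rewrite -(inord_val x) cyc_inv // inordK; last by apply: cinvf_bd.
apply: (@mono_nat_lemma m.+1 (fun y => nat_of_ord ((s^-1)%g (inord y)))) => //.
- move=> y z yn zn /val_inj /perm_inj /(congr1 (@nat_of_ord _)).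
  by rewrite !inordK.
- by rewrite /p; congr (nat_of_ord ((s^-1)%g _)); apply/val_inj; rewrite /= inordK.
Qed.

Lemma cond_iff n j p (P : nat -> nat) :
  1 <= j -> j <= p -> p < n ->
  (forall x y, j <= x -> x < y -> y < n -> P (cycf p x) < P (cycf p y)) <->
  [/\ forall x y, j.+1 <= x -> x < y -> y < n -> P x < P y,
      j < p -> P p < P 0 & p.+1 < n -> P 0 < P p.+1].
Proof.
move=> j1 jp pn; split.
- move=> H; split.
  + move=> x y jx xy yn. case: (leqP x p) => xp; case: (leqP y p) => yp.
    * have := H x.-1 y.-1 ltac:(lia) ltac:(lia) ltac:(lia).
      rewrite !cycf_lt ?prednK //; lia.
    * have := H x.-1 y ltac:(lia) ltac:(lia) ltac:(lia).
      rewrite cycf_lt ?prednK ?cycf_gt //; lia.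
    * lia.
    * have := H x y ltac:(lia) ltac:(lia) ltac:(lia).
      rewrite !cycf_gt //; lia.
  + move=> jp'. have := H p.-1 p ltac:(lia) ltac:(lia) ltac:(lia).
    rewrite cycf_lt ?prednK ?cycf_eq //; lia.
  + move=> pn'. have := H p p.+1 ltac:(lia) ltac:(lia) ltac:(lia).
    by rewrite cycf_eq cycf_gt.
- case=> H1 H2 H3 x y jx xy yn.
  case: (ltngtP x p) => xp; case: (ltngtP y p) => yp; try lia.
  + rewrite !cycf_lt //; apply: H1; lia.
  + rewrite cycf_lt // cycf_gt //; apply: H1; lia.
  + rewrite cycf_lt // yp cycf_eq.
    case: (ltngtP x.+1 p) => xp'; try lia.
    * apply: ltn_trans (H1 _ _ _ _ _) (H2 _); lia.
    * rewrite xp'; apply: H2; lia.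
  + rewrite !cycf_gt //; apply: H1; lia.
  + rewrite xp cycf_eq cycf_gt //.
    case: (ltngtP p.+1 y) => yp'; try lia.
    * apply: ltn_trans (H3 _) (H1 _ _ _ _ _); lia.
    * rewrite -yp'; apply: H3; lia.
Qed.

Lemma tele (f : nat -> bool) j k : f (j + k) = false ->
  (forall q, j <= q -> q < j + k -> f q.+1 -> f q) ->
  \sum_(j <= q < j + k) (f q && ~~ f q.+1) = f j.
Proof.
elim: k j => [|k IH] j hf hm.
  by rewrite addn0 in hf *; rewrite big_geq // hf.
rewrite big_ltn; last lia.
rewrite -addSnnS IH //; last first.
- move=> q h1 h2; apply: hm; lia.
- by rewrite addSnnS.
case E: (f j.+1).
- by rewrite (hm j) //=; lia.
- by rewrite andbT addn0.
Qed.

Definition Pw m (w : 'S_m.+1) (y : nat) : nat := (w^-1)%g (inord y).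

Lemma incPw m (a : nat) (w : 'S_m.+1) :
  reflect (forall x y : nat, a <= x -> x < y -> y < m.+1 -> Pw w x < Pw w y)
    (inc_above a w).
Proof. exact: incP. Qed.

Lemma Pw_inj m (w : 'S_m.+1) x y : x < m.+1 -> y < m.+1 -> Pw w x = Pw w y -> x = y.
Proof.
move=> xn yn /val_inj /perm_inj /(congr1 (@nat_of_ord _)).
by rewrite !inordK.
Qed.

Lemma condP m (w : 'S_m.+1) j (p : 'I_m.+1) :
  reflect (forall x y, j <= x -> x < y -> y < m.+1 ->
             Pw w (cycf p x) < Pw w (cycf p y))
          (inc_above j (w * (cyc p)^-1)%g).
Proof.
apply: (iffP (incP _ _)) => H x y jx xy yn; have := H x y jx xy yn;
  rewrite /Pw invMg invgK !permM !cycE !inordK //; lia.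
Qed.

Lemma key_coef m (w : 'S_m.+1) j : 1 <= j <= m.+1 ->
  \sum_(p < m.+1) inc_above j (w * (cyc p)^-1)%g =
  inc_above j w * j + inc_above j.+1 w * (j < m.+1).
Proof.
case/andP => j1 jn.
pose G q : nat := inc_above j (w * (cyc (inord q : 'I_m.+1))^-1)%g.
have -> : \sum_(p < m.+1) inc_above j (w * (cyc p)^-1)%g = \sum_(p < m.+1) G p.
  by apply: eq_bigr => p _; rewrite /G inord_val.
rewrite -(big_mkord (fun _ => true) G) (@big_cat_nat _ _ _ j) //=.
congr (_ + _).
  rewrite (eq_big_nat _ _ (F2 := fun=> nat_of_bool (inc_above j w))); last first.
    move=> q /andP[_ qj]; rewrite /G; congr (nat_of_bool _).
    apply/idP/idP => [/condP H|/incPw H].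
    - apply/incPw => x y jx xy yn; have := H x y jx xy yn.
      by rewrite inordK ?cycf_gt //; lia.
    - apply/condP => x y jx xy yn; rewrite inordK ?cycf_gt //; try lia.
      exact: H.
  by rewrite sum_nat_const_nat subn0 mulnC.
case: (ltnP j m.+1) => jn'; last first.
  by rewrite big_geq ?muln0 //; lia.
rewrite muln1.
case A: (inc_above j.+1 w); last first.
  rewrite big_nat big1 // => q /andP[jq qn]; rewrite /G.
  suff -> : inc_above j (w * (cyc (inord q : 'I_m.+1))^-1)%g = false by [].
  apply/negbTE/negP => /condP; rewrite inordK //.
  case/(@cond_iff _ _ _ _ j1 jq qn) => H1 _ _.
  by rewrite (introT (incPw _ _) H1) in A.
pose f q := (q == j) || (q < m.+1) && (Pw w q < Pw w 0).
transitivity (\sum_(j <= q < j + (m.+1 - j)) (f q && ~~ f q.+1)).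
  rewrite subnKC; last lia.
  apply: eq_big_nat => q /andP[jq qn]; rewrite /G; congr (nat_of_bool _).
  apply/idP/idP.
  - move/condP; rewrite inordK //.
    case/(@cond_iff _ _ _ _ j1 jq qn) => H1 H2 H3.
    apply/andP; split.
    + rewrite /f; case: (ltngtP j q) => h; try lia.
    + rewrite /f; apply/negP => /orP[/eqP ?|/andP[h1 h2]]; first lia.
      have := H3 h1; lia.
  - move=> /andP[hf hnf]; apply/condP; rewrite inordK //.
    apply/(@cond_iff _ _ _ _ j1 jq qn); split.
    + by move/incPw: A.
    + move=> jq'; move: hf; rewrite /f; case/orP => [/eqP ?|/andP[_ ?]] //; lia.
    + move=> qn'; move: hnf; rewrite /f qn' negb_or /= => /andP[_ h].
      rewrite -leqNgt in h.
      have := @Pw_inj m w q.+1 0 qn' erefl; lia.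
rewrite tele.
- by rewrite /f eqxx.
- rewrite subnKC; last lia.
  by rewrite /f ltnn andFb orbF; apply/eqP; lia.
- move=> q jq qn; rewrite subnKC in qn; last lia.
  rewrite /f; case/orP => [/eqP ?|/andP[h1 h2]]; first lia.
  case: (ltngtP j q) => h; try lia.
  + apply/orP; right; rewrite qn /=.
    have := (elimT (incPw _ _) A) q q.+1 h (ltnSn _) h1; lia.
Qed.

Lemma stirling2_gt k j : k < j -> stirling2 k j = 0.
Proof.
elim: k j => [|k IH] [|j] //= h.
rewrite !IH ?muln0 //; lia.
Qed.

Local Open Scope ring_scope.

Lemma qmulE n (f g : QSn n) w : qmul f g w = \sum_(s : 'S_n) f s * g (w * s^-1)%g.
Proof.
rewrite ffunE; apply: eq_bigr => s _.
rewrite (bigD1 (w * s^-1)%g) //= big1 ?addr0.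
  by rewrite /deck_mul mulgVK eqxx mulr1n.
move=> t ht; rewrite /deck_mul.
case: eqP => [E|]; last by rewrite mulr0n.
by move: ht; rewrite -E mulgK eqxx.
Qed.

Lemma qmul_sum n (f : QSn n) (r : seq nat) (G : nat -> QSn n) (c : nat -> nat) :
  qmul f (\sum_(j <- r) G j *+ c j) = \sum_(j <- r) qmul f (G j) *+ c j.
Proof.
apply/ffunP => w; rewrite qmulE sum_ffunE.
under eq_bigr => s _ do rewrite sum_ffunE mulr_sumr.
rewrite exchange_big /=; apply: eq_bigr => j _.
rewrite ffunMnE qmulE -sumrMnl; apply: eq_bigr => s _.
by rewrite ffunMnE mulrnAr.
Qed.

Lemma qmul_one n (f : QSn n) : qmul f (qone n) = f.
Proof.
apply/ffunP => w; rewrite qmulE (bigD1 w) //= big1 ?addr0.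
  by rewrite ffunE mulgV eqxx mulr1.
move=> s hs; by rewrite ffunE -eq_mulgV1 eq_sym (negbTE hs) mulr0.
Qed.

Lemma qmul_B1 m (g : QSn m.+1) w :
  qmul (B m.+1 1) g w = \sum_(p < m.+1) g (w * (cyc p)^-1)%g.
Proof.
rewrite qmulE.
rewrite (eq_bigr (fun s => if inc_above 1 s then g (w * s^-1)%g else 0)); last first.
  by move=> s _; rewrite ffunE; case: (inc_above 1 s); rewrite ?mul1r ?mul0r.
rewrite -big_mkcond (reindex_onto (fun p : 'I_m.+1 => cyc p) (fun s => (s^-1)%g ord0)) /=; last first.
  by move=> s hs; symmetry; apply: inc1_cyc.
by apply: eq_bigl => p; rewrite cyc_inc cyc_inv0 eqxx.
Qed.

Lemma qmul_B1B m j : (1 <= j <= m.+1)%N ->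
  qmul (B m.+1 1) (B m.+1 j) = B m.+1 j *+ j + B m.+1 j.+1 *+ (j < m.+1)%N.
Proof.
move=> hj; apply/ffunP => w; rewrite qmul_B1.
under eq_bigr => p _ do rewrite ffunE.
rewrite !ffunE !ffunMnE !ffunE.
by rewrite -natr_sum key_coef // natrD -!mulrnA.
Qed.

Lemma sum_shift (V : nmodType) (G : nat -> V) n (c : nat -> nat) : c 0%N = 0%N ->
  \sum_(1 <= j < n.+1) (G j *+ j + G j.+1 *+ (j < n)%N) *+ c j =
  \sum_(1 <= j < n.+1) G j *+ (j * c j + c j.-1)%N.
Proof.
move=> c0.
under eq_bigr => j _ do rewrite mulrnDl -!mulrnA.
under [RHS]eq_bigr => j _ do rewrite mulrnDr.
rewrite !big_split /=; congr (_ + _).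
case: n => [|n]; first by rewrite !big_geq.
rewrite [in LHS]big_nat_recr //= ltnn mul0n mulr0n addr0.
rewrite [in RHS]big_nat_recl //= c0 mulr0n add0r.
by apply: eq_big_nat => j /andP[_ jn]; rewrite jn mul1n.
Qed.

Theorem mainTheorem5 (n k : nat) (hn : (1 <= n)%N) (hk : (1 <= k)%N) :
  qpow (B n 1) k =
  \sum_(1 <= j < (minn k n).+1) B n j *+ stirling2 k j.
Proof.
case: n hn => // m _.
have inv : forall k, (1 <= k)%N ->
    qpow (B m.+1 1) k = \sum_(1 <= j < m.+2) B m.+1 j *+ stirling2 k j.
  elim=> // k' IH _; case: k' IH => [_|k' IH].
  - have -> : qpow (B m.+1 1) 1 = qmul (B m.+1 1) (qone _) by [].
    rewrite qmul_one big_ltn // big_nat big1 ?addr0 //.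
    by move=> j /andP[hj _]; rewrite stirling2_gt ?mulr0n.
  - have -> : qpow (B m.+1 1) k'.+2 = qmul (B m.+1 1) (qpow (B m.+1 1) k'.+1) by [].
    rewrite IH // qmul_sum.
    rewrite (eq_big_nat _ _ (F2 := fun j => (B m.+1 j *+ j + B m.+1 j.+1 *+ (j < m.+1)%N) *+ stirling2 k'.+1 j)); last first.
      by move=> j /andP[j1 j2]; rewrite qmul_B1B // j1.
    rewrite sum_shift //; apply: eq_big_nat => j /andP[j1 _].
    by case: j j1.
rewrite inv //.
case: (leqP m.+1 k) => hkm.
  by [].
rewrite (@big_cat_nat _ _ _ k.+1) //=.
rewrite [X in _ + X = _]big_nat [X in _ + X = _]big1 ?addr0 //.
  by move=> j /andP[hj _]; rewrite stirling2_gt ?mulr0n.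
by apply: ltnW.
Qed.
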